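(* Let $R$ be a ring. An injective left (or right) $R$-module is flat if and only if it is Gorenstein flat.
   Context: A left $R$-module $M$ is Gorenstein flat if there exists an exact sequence $\cdots\to F_1\to F_0\to F^0\to F^1\to\cdots$ of flat left $R$-modules with $M=\mathrm{Im}(F_0\to F^0)$ which remains exact after applying $I\otimes_R-$ for every injective right $R$-module $I$ (similarly for right modules, using $-\otimes_R I$ with $I$ an injective left module). *)

(* Defs.v *)
(* Rings are [pzRingType] (associative, unital, possibly the
   zero ring).  Left R-modules are [lmodType R]; right R-modules are left
   modules over the converse ring, [lmodType R^c] (so [(r : R^c) *: x] is
   the right action x.r). *)
From mathcomp Require Import all_boot all_algebra.
Set Implicit Arguments. Unset Strict Implicit. Unset Printing Implicit Defensive.
Import GRing.Theory.
Local Open Scope ring_scope.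

(* ---------- Tensor product A (x)_R B, A a right, B a left R-module ---------
   Elements of A (x)_R B are represented by finite formal sums
   sum_i a_i (x) b_i, i.e. sequences of pairs; [teq s t] is the congruence
   generated by the defining relations of the tensor product (the
   presentation of A (x)_R B as a quotient of the free abelian group on
   A * B).  Since [(x,m) + (-x,m) ~ (0,m) ~ 0], every generator is invertible,
   so the quotient monoid is the abelian group A (x)_R B. *)
Inductive teq (R : pzRingType) (A : lmodType R^c) (B : lmodType R) :
    seq (A * B) -> seq (A * B) -> Prop :=
| teq_refl s : teq s s
| teq_sym s t : teq s t -> teq t s
| teq_trans s t u : teq s t -> teq t u -> teq s u
| teq_cat s1 t1 s2 t2 : teq s1 t1 -> teq s2 t2 -> teq (s1 ++ s2) (t1 ++ t2)
| teq_swap s t : teq (s ++ t) (t ++ s)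
| teq_addl (x y : A) (m : B) : teq [:: (x + y, m)] [:: (x, m); (y, m)]
| teq_addr (x : A) (m n : B) : teq [:: (x, m + n)] [:: (x, m); (x, n)]
| teq_zerol (m : B) : teq [:: (0 : A, m)] [::]
| teq_zeror (x : A) : teq [:: (x, 0 : B)] [::]
| teq_bal (r : R) (x : A) (m : B) : teq [:: ((r : R^c) *: x, m)] [:: (x, r *: m)].

Definition tmap_l (R : pzRingType) (A A' : lmodType R^c) (B : lmodType R)
  (f : A -> A') (s : seq (A * B)) : seq (A' * B) :=
  map (fun p => (f p.1, p.2)) s.
Definition tmap_r (R : pzRingType) (A : lmodType R^c) (B B' : lmodType R)
  (g : B -> B') (s : seq (A * B)) : seq (A * B') :=
  map (fun p => (p.1, g p.2)) s.

Definition injective_mod (S : pzRingType) (E : lmodType S) : Prop :=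
  forall (A B : lmodType S) (f : {linear A -> B}) (g : {linear A -> E}),
    injective f -> exists h : {linear B -> E}, forall a, h (f a) = g a.

Definition lflat (R : pzRingType) (M : lmodType R) : Prop :=
  forall (A B : lmodType R^c) (f : {linear A -> B}), injective f ->
    forall s : seq (A * M), teq (tmap_l f s) [::] -> teq s [::].

Definition rflat (R : pzRingType) (N : lmodType R^c) : Prop :=
  forall (A B : lmodType R) (f : {linear A -> B}), injective f ->
    forall s : seq (N * A), teq (tmap_r f s) [::] -> teq s [::].

(* ---------- Gorenstein flat modules ----------
   The complex ... -> F_1 -> F_0 -> F^0 -> F^1 -> ... is indexed by int with
   differentials d k : F k -> F (k+1); F_0 = F (-1), F^0 = F 0 (written
   F (-1 + 1)), and M is isomorphic to Im(F_0 -> F^0). *)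
Definition lgflat (R : pzRingType) (M : lmodType R) : Prop :=
  exists (F : int -> lmodType R) (d : forall k : int, {linear F k -> F (k + 1)}),
    [/\ (forall k, lflat (F k)),
        (forall (k : int) (y : F (k + 1)), d (k + 1) y = 0 <-> exists x, d k x = y),
        (exists e : {linear M -> F (-1 + 1)}, injective e /\
           forall y, (exists x, d (-1) x = y) <-> exists m, e m = y) &
        (* exactness of I (x)_R - applied to the complex, I injective right *)
        (forall (I : lmodType R^c), injective_mod I ->
           forall (k : int) (s : seq (I * F (k + 1))),
             teq (tmap_r (d (k + 1)) s) [::] ->
             exists t : seq (I * F k), teq (tmap_r (d k) t) s)].

Definition rgflat (R : pzRingType) (N : lmodType R^c) : Prop :=
  exists (F : int -> lmodType R^c) (d : forall k : int, {linear F k -> F (k + 1)}),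
    [/\ (forall k, rflat (F k)),
        (forall (k : int) (y : F (k + 1)), d (k + 1) y = 0 <-> exists x, d k x = y),
        (exists e : {linear N -> F (-1 + 1)}, injective e /\
           forall y, (exists x, d (-1) x = y) <-> exists m, e m = y) &
        (forall (I : lmodType R), injective_mod I ->
           forall (k : int) (s : seq (F (k + 1) * I)),
             teq (tmap_l (d (k + 1)) s) [::] ->
             exists t : seq (F k * I), teq (tmap_l (d k) t) s)].

(* Main.v *)
Require Import Defs.
From HB Require Import structures.
From mathcomp Require Import all_boot all_algebra.
Set Implicit Arguments. Unset Strict Implicit. Unset Printing Implicit Defensive.
Import GRing.Theory.
Local Open Scope ring_scope.

Lemma teq_mapr (R : pzRingType) (A : lmodType R^c) (B B' : lmodType R)
  (g : B -> B') :
  (forall m n, g (m + n) = g m + g n) -> g 0 = 0 ->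
  (forall (r : R) m, g (r *: m) = r *: g m) ->
  forall s t : seq (A * B), teq s t -> teq (tmap_r g s) (tmap_r g t).
Proof.
move=> gD g0 gZ s t; elim=> {s t} /=.
- by move=> s; apply: teq_refl.
- by move=> s t _; apply: teq_sym.
- by move=> s t u _ H1 _ H2; apply: teq_trans H1 H2.
- by move=> s1 t1 s2 t2 _ H1 _ H2; rewrite /tmap_r !map_cat; apply: teq_cat.
- by move=> s t; rewrite /tmap_r !map_cat; apply: teq_swap.
- by move=> x y m; apply: teq_addl.
- by move=> x m n; rewrite /tmap_r /= gD; apply: teq_addr.
- by move=> m; apply: teq_zerol.
- by move=> x; rewrite /tmap_r /= g0; apply: teq_zeror.
- by move=> r x m; rewrite /tmap_r /= gZ; apply: teq_bal.
Qed.

Lemma teq_mapl (R : pzRingType) (A A' : lmodType R^c) (B : lmodType R)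
  (g : A -> A') :
  (forall m n, g (m + n) = g m + g n) -> g 0 = 0 ->
  (forall (r : R^c) m, g (r *: m) = r *: g m) ->
  forall s t : seq (A * B), teq s t -> teq (tmap_l g s) (tmap_l g t).
Proof.
move=> gD g0 gZ s t; elim=> {s t} /=.
- by move=> s; apply: teq_refl.
- by move=> s t _; apply: teq_sym.
- by move=> s t u _ H1 _ H2; apply: teq_trans H1 H2.
- by move=> s1 t1 s2 t2 _ H1 _ H2; rewrite /tmap_l !map_cat; apply: teq_cat.
- by move=> s t; rewrite /tmap_l !map_cat; apply: teq_swap.
- by move=> x y m; rewrite /tmap_l /= gD; apply: teq_addl.
- by move=> x m n; apply: teq_addr.
- by move=> m; rewrite /tmap_l /= g0; apply: teq_zerol.
- by move=> x; apply: teq_zeror.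
- by move=> r x m; rewrite /tmap_l /= gZ; apply: teq_bal.
Qed.

Lemma teq_perm4 (R : pzRingType) (A : lmodType R^c) (B : lmodType R)
  (a b c d : seq (A * B)) : teq (a ++ b ++ c ++ d) (a ++ c ++ b ++ d).
Proof.
apply: teq_cat; first exact: teq_refl.
rewrite !catA; apply: teq_cat; [exact: teq_swap | exact: teq_refl].
Qed.

Lemma teq_splitr (R : pzRingType) (A : lmodType R^c) (M : lmodType R)
  (s : seq (A * (M * M))) :
  teq s (map (fun p => (p.1, (p.2.1, 0))) s ++ map (fun p => (p.1, (0, p.2.2))) s).
Proof.
elim: s => [|[x [a b]] s IH] /=; first exact: teq_refl.
apply: (@teq_trans _ _ _ _ ([:: (x, (a, 0)); (x, (0, b))] ++ s)).
  apply: (@teq_cat _ _ _ [:: _] _ s s); last exact: teq_refl.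
  have -> : ((a, b) : M * M) = (a, 0) + (0, b).
    by apply: injective_projections; rewrite /= ?addr0 ?add0r.
  exact: teq_addr.
apply: (@teq_trans _ _ _ _ ([:: (x, (a, 0)); (x, (0, b))] ++
   (map (fun p => (p.1, (p.2.1, 0))) s ++ map (fun p => (p.1, (0, p.2.2))) s))).
  apply: teq_cat; [exact: teq_refl | exact: IH].
exact: (@teq_perm4 _ _ _ [:: _] [:: _]).
Qed.

Lemma teq_splitl (R : pzRingType) (M : lmodType R^c) (A : lmodType R)
  (s : seq ((M * M) * A)) :
  teq s (map (fun p => ((p.1.1, 0), p.2)) s ++ map (fun p => ((0, p.1.2), p.2)) s).
Proof.
elim: s => [|[[a b] x] s IH] /=; first exact: teq_refl.
apply: (@teq_trans _ _ _ _ ([:: ((a, 0), x); ((0, b), x)] ++ s)).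
  apply: (@teq_cat _ _ _ [:: _] _ s s); last exact: teq_refl.
  have -> : ((a, b) : M * M) = (a, 0) + (0, b).
    by apply: injective_projections; rewrite /= ?addr0 ?add0r.
  exact: teq_addl.
apply: (@teq_trans _ _ _ _ ([:: ((a, 0), x); ((0, b), x)] ++
   (map (fun p => ((p.1.1, 0), p.2)) s ++ map (fun p => ((0, p.1.2), p.2)) s))).
  apply: teq_cat; [exact: teq_refl | exact: IH].
exact: (@teq_perm4 _ _ _ [:: _] [:: _]).
Qed.

Definition ddm (S : pzRingType) (M : lmodType S) (p : M * M) : M * M := (p.2, 0).
Lemma ddm_lin (S : pzRingType) (M : lmodType S) : linear (@ddm S M).
Proof. by move=> a [x1 x2] [y1 y2]; rewrite /ddm /=; apply: injective_projections; rewrite /= ?scaler0 ?addr0. Qed.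
HB.instance Definition _ (S : pzRingType) (M : lmodType S) :=
  GRing.isLinear.Build S (M * M)%type (M * M)%type *:%R (@ddm S M) (@ddm_lin S M).

Definition inc1 (S : pzRingType) (M : lmodType S) (m : M) : M * M := (m, 0).
Lemma inc1_lin (S : pzRingType) (M : lmodType S) : linear (@inc1 S M).
Proof. by move=> a x y; rewrite /inc1; apply: injective_projections; rewrite /= ?scaler0 ?addr0. Qed.
HB.instance Definition _ (S : pzRingType) (M : lmodType S) :=
  GRing.isLinear.Build S M (M * M)%type *:%R (@inc1 S M) (@inc1_lin S M).

Lemma pr1D (S : pzRingType) (M : lmodType S) (m n : M) :
  ((m + n, 0) : M * M) = (m, 0) + (n, 0).
Proof. by apply: injective_projections; rewrite /= ?addr0. Qed.
Lemma pr2D (S : pzRingType) (M : lmodType S) (m n : M) :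
  ((0, m + n) : M * M) = (0, m) + (0, n).
Proof. by apply: injective_projections; rewrite /= ?addr0. Qed.
Lemma pr1Z (S : pzRingType) (M : lmodType S) (r : S) (m : M) :
  ((r *: m, 0) : M * M) = r *: (m, 0).
Proof. by apply: injective_projections; rewrite /= ?scaler0. Qed.
Lemma pr2Z (S : pzRingType) (M : lmodType S) (r : S) (m : M) :
  ((0, r *: m) : M * M) = r *: (0, m).
Proof. by apply: injective_projections; rewrite /= ?scaler0. Qed.

Lemma lflat_prod (R : pzRingType) (M : lmodType R) :
  lflat M -> lflat ((M * M)%type : lmodType R).
Proof.
move=> fM A B f injf s Hs.
apply: teq_trans (teq_splitr s) _.
have H1 : teq (tmap_r (fun p : M * M => p.1) s) [::].
  apply: (fM _ _ f injf).
  have := @teq_mapr R B _ _ (fun p : M * M => p.1) (fun _ _ => erefl) erefl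
     (fun _ _ => erefl) _ _ Hs.
  by rewrite /tmap_r /tmap_l -!map_comp.
have H2 : teq (tmap_r (fun p : M * M => p.2) s) [::].
  apply: (fM _ _ f injf).
  have := @teq_mapr R B _ _ (fun p : M * M => p.2) (fun _ _ => erefl) erefl
     (fun _ _ => erefl) _ _ Hs.
  by rewrite /tmap_r /tmap_l -!map_comp.
have G1 := @teq_mapr R A _ _ (fun m : M => ((m, 0) : M * M))
  (@pr1D _ _) erefl (@pr1Z _ _) _ _ H1.
have G2 := @teq_mapr R A _ _ (fun m : M => ((0, m) : M * M))
  (@pr2D _ _) erefl (@pr2Z _ _) _ _ H2.
rewrite /tmap_r -!map_comp in G1 G2.
by apply: (@teq_cat _ _ _ _ [::] _ [::]).
Qed.

Lemma rflat_prod (R : pzRingType) (M : lmodType R^c) :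
  rflat M -> rflat ((M * M)%type : lmodType R^c).
Proof.
move=> fM A B f injf s Hs.
apply: teq_trans (teq_splitl s) _.
have H1 : teq (tmap_l (fun p : M * M => p.1) s) [::].
  apply: (fM _ _ f injf).
  have := @teq_mapl R _ _ B (fun p : M * M => p.1) (fun _ _ => erefl) erefl
     (fun _ _ => erefl) _ _ Hs.
  by rewrite /tmap_r /tmap_l -!map_comp.
have H2 : teq (tmap_l (fun p : M * M => p.2) s) [::].
  apply: (fM _ _ f injf).
  have := @teq_mapl R _ _ B (fun p : M * M => p.2) (fun _ _ => erefl) erefl
     (fun _ _ => erefl) _ _ Hs.
  by rewrite /tmap_r /tmap_l -!map_comp.
have G1 := @teq_mapl R _ _ A (fun m : M => ((m, 0) : M * M))
  (@pr1D _ _) erefl (@pr1Z _ _) _ _ H1.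
have G2 := @teq_mapl R _ _ A (fun m : M => ((0, m) : M * M))
  (@pr2D _ _) erefl (@pr2Z _ _) _ _ H2.
rewrite /tmap_l -!map_comp in G1 G2.
by apply: (@teq_cat _ _ _ _ [::] _ [::]).
Qed.

Lemma lflat_summand (R : pzRingType) (M F : lmodType R)
  (e : {linear M -> F}) (h : {linear F -> M}) :
  (forall m, h (e m) = m) -> lflat F -> lflat M.
Proof.
move=> hK fF A B f injf s Hs.
have H1 : teq (tmap_r e s) [::].
  apply: (fF _ _ f injf).
  have := @teq_mapr R B _ _ e (raddfD _) (raddf0 _) (linearZZ _) _ _ Hs.
  by rewrite /tmap_r /tmap_l -!map_comp.
have := @teq_mapr R A _ _ h (raddfD _) (raddf0 _) (linearZZ _) _ _ H1.
rewrite /tmap_r -map_comp.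
have -> : map ((fun p : A * F => (p.1, h p.2)) \o (fun p : A * M => (p.1, e p.2))) s = s.
  by elim: s {Hs H1} => [|[a m] s IH] //=; rewrite hK IH.
by [].
Qed.

Lemma rflat_summand (R : pzRingType) (M F : lmodType R^c)
  (e : {linear M -> F}) (h : {linear F -> M}) :
  (forall m, h (e m) = m) -> rflat F -> rflat M.
Proof.
move=> hK fF A B f injf s Hs.
have H1 : teq (tmap_l e s) [::].
  apply: (fF _ _ f injf).
  have := @teq_mapl R _ _ B e (raddfD _) (raddf0 _) (linearZZ _) _ _ Hs.
  by rewrite /tmap_r /tmap_l -!map_comp.
have := @teq_mapl R _ _ A h (raddfD _) (raddf0 _) (linearZZ _) _ _ H1.
rewrite /tmap_l -map_comp.
have -> : map ((fun p : F * A => (h p.1, p.2)) \o (fun p : M * A => (e p.1, p.2))) s = s.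
  by elim: s {Hs H1} => [|[m a] s IH] //=; rewrite hK IH.
by [].
Qed.

Lemma lflat_gflat (R : pzRingType) (M : lmodType R) : lflat M -> lgflat M.
Proof.
move=> fM.
exists (fun _ : int => ((M * M)%type : lmodType R)).
exists (fun _ : int => (@ddm R M : {linear _ -> _})).
split.
- by move=> k; apply: lflat_prod.
- move=> k [a b]; rewrite /ddm /=; split.
    move=> /(congr1 fst) /= ->; by exists (0, a).
  by case=> [[x y]] [<- <-].
- exists (@inc1 R M : {linear _ -> _}); split.
    by move=> x y [].
  move=> [a b]; rewrite /ddm /inc1 /=; split.
    by case=> [[x y]] [<- <-]; exists y.
  by case=> m [<- <-]; exists (0, m).
- move=> I _ k s Hs.
  exists (tmap_r (fun p : M * M => (p.2, p.1)) s).
  apply: teq_sym; apply: teq_trans (teq_splitr s) _.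
  have G := @teq_mapr R I _ _ (fun p : M * M => ((p.2, p.1) : M * M))
    (fun _ _ => erefl) erefl (fun _ _ => erefl) _ _ Hs.
  rewrite /tmap_r -!map_comp /= in G *.
  have -> : [seq (x.1, (0, x.2.2)) | x <- s] =
     map ((fun p : I * (M * M) => (p.1, (p.2.2, p.2.1)))
          \o (fun p : I * (M * M) => (p.1, ddm p.2))) s by [].
  rewrite -[X in teq _ X]cats0.
  apply: teq_cat; [exact: teq_refl | exact: G].
Qed.

Lemma rflat_gflat (R : pzRingType) (M : lmodType R^c) : rflat M -> rgflat M.
Proof.
move=> fM.
exists (fun _ : int => ((M * M)%type : lmodType R^c)).
exists (fun _ : int => (@ddm R^c M : {linear _ -> _})).
split.
- by move=> k; apply: rflat_prod.
- move=> k [a b]; rewrite /ddm /=; split.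
    move=> /(congr1 fst) /= ->; by exists (0, a).
  by case=> [[x y]] [<- <-].
- exists (@inc1 R^c M : {linear _ -> _}); split.
    by move=> x y [].
  move=> [a b]; rewrite /ddm /inc1 /=; split.
    by case=> [[x y]] [<- <-]; exists y.
  by case=> m [<- <-]; exists (0, m).
- move=> I _ k s Hs.
  exists (tmap_l (fun p : M * M => (p.2, p.1)) s).
  apply: teq_sym; apply: teq_trans (teq_splitl s) _.
  have G := @teq_mapl R _ _ I (fun p : M * M => ((p.2, p.1) : M * M))
    (fun _ _ => erefl) erefl (fun _ _ => erefl) _ _ Hs.
  rewrite /tmap_l -!map_comp /= in G *.
  have -> : [seq ((0, x.1.2), x.2) | x <- s] =
     map ((fun p : (M * M) * I => ((p.1.2, p.1.1), p.2))
          \o (fun p : (M * M) * I => (ddm p.1, p.2))) s by [].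
  rewrite -[X in teq _ X]cats0.
  apply: teq_cat; [exact: teq_refl | exact: G].
Qed.

Theorem lemma2p5 (R : pzRingType) :
  (forall M : lmodType R, injective_mod M -> (lflat M <-> lgflat M)) /\
  (forall N : lmodType R^c, injective_mod N -> (rflat N <-> rgflat N)).
Proof.
split.
- move=> M injM; split; first exact: lflat_gflat.
  case=> F [d [fF _ [e [inje _]] _]].
  have [h hK] := injM _ _ e (@idfun M : {linear _ -> _}) inje.
  exact: (lflat_summand hK (fF _)).
- move=> M injM; split; first exact: rflat_gflat.
  case=> F [d [fF _ [e [inje _]] _]].
  have [h hK] := injM _ _ e (@idfun M : {linear _ -> _}) inje.
  exact: (rflat_summand hK (fF _)).
Qed.
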